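(* Let $K_{n_1,n_2,n_3}$ be the complete tripartite graph with parts $V_1,V_2,V_3$ and vertex set $V=V_1\cup V_2\cup V_3$, where $n_i=|V_i|\ge 2$ for $i=1,2,3$. Then the diameter of the 1-skeleton of $\mathrm{CUT}(K_{n_1,n_2,n_3})$ equals $2$.
   Context: For an undirected graph $G=(V,E)$ and $S\subseteq V$, $\delta(S)\subseteq E$ denotes the set of edges with exactly one endpoint in $S$, and $\mathbf v(S)\in\{0,1\}^{E}$ is its incidence vector ($v(S)_e=1$ iff $e\in\delta(S)$). The cut polytope is $\mathrm{CUT}(G)=\operatorname{conv}\{\mathbf v(S):S\subseteq V\}\subset\mathbb R^{E}$. The 1-skeleton of a polytope is the graph whose vertices are the polytope's vertices and whose edges are its one-dimensional faces; the diameter is the maximum shortest-path edge distance between two vertices of this graph. *)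

(* Defs.v *)
From HB Require Import structures.
From mathcomp Require Import all_boot all_order all_algebra.
Set Implicit Arguments. Unset Strict Implicit. Unset Printing Implicit Defensive.
Import Order.TTheory GRing.Theory Num.Theory.
Local Open Scope ring_scope.

Section CutPolytope.
Variables (R : realFieldType) (T : finType) (adj : rel T).

Definition is_edge (e : {set T}) : bool :=
  [exists x, [exists y, adj x y && (e == [set x; y])]].

Definition edgeT : finType := {e : {set T} | is_edge e}.

Definition point := {ffun edgeT -> R}.

Definition cutvec (S : {set T}) : point :=
  [ffun e : edgeT => if #|val e :&: S| == 1%N then 1 else 0].

Definition cut_polytope (x : point) : Prop :=
  exists lam : {ffun {set T} -> R},
    (forall S, 0 <= lam S) /\ \sum_S lam S = 1 /\
    x = [ffun e => \sum_S lam S * cutvec S e].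

Definition dot (c x : point) : R := \sum_e c e * x e.

(* Faces of a convex set Q (intersection with a supporting hyperplane;
   includes Q itself via c = 0, d = 0). *)
Definition is_face (Q F : point -> Prop) : Prop :=
  exists (c : point) (d : R),
    (forall x, Q x -> dot c x <= d) /\
    (forall x, F x <-> (Q x /\ dot c x = d)).

Definition is_vertex (Q : point -> Prop) (u : point) : Prop :=
  is_face Q (fun x => x = u).

Definition affdim1 (F : point -> Prop) : Prop :=
  exists a b, F a /\ F b /\ a <> b /\
    forall x, F x -> exists t : R, x = [ffun e => a e + t * (b e - a e)].

Definition skel_adj (Q : point -> Prop) (u v : point) : Prop :=
  is_vertex Q u /\ is_vertex Q v /\ u <> v /\
  exists F, is_face Q F /\ affdim1 F /\ F u /\ F v.

End CutPolytope.
Arguments cut_polytope R {T} adj x.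

Inductive walk_le {X : Type} (r : X -> X -> Prop) : nat -> X -> X -> Prop :=
| walk_nil k u : walk_le r k u u
| walk_cons k u v w : r u v -> walk_le r k v w -> walk_le r k.+1 u w.

Definition skel_diameter {R : realFieldType} {T : finType} {adj : rel T}
  (Q : point R adj -> Prop) (d : nat) : Prop :=
  (forall u v, is_vertex Q u -> is_vertex Q v -> walk_le (skel_adj Q) d u v) /\
  (exists u v, is_vertex Q u /\ is_vertex Q v /\
               ~ walk_le (skel_adj Q) d.-1 u v).

Definition tri_vertex (n1 n2 n3 : nat) : finType :=
  ('I_n1 + ('I_n2 + 'I_n3))%type.

Definition tri_part {n1 n2 n3 : nat} (x : tri_vertex n1 n2 n3) : nat :=
  match x with inl _ => 0 | inr (inl _) => 1 | inr (inr _) => 2 end%N.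

Definition tri_adj (n1 n2 n3 : nat) : rel (tri_vertex n1 n2 n3) :=
  fun x y => tri_part x != tri_part y.
Arguments tri_adj n1 n2 n3 : clear implicits.

(* Main.v *)
Require Import Defs.
From mathcomp Require Import all_boot all_order all_algebra ring lra.
Set Implicit Arguments. Unset Strict Implicit. Unset Printing Implicit Defensive.
Import Order.TTheory GRing.Theory Num.Theory.
Local Open Scope ring_scope.

Section Gen.
Variables (R : realFieldType) (T : finType) (adj : rel T).
Hypothesis adj_irr : forall x y, adj x y -> x != y.

Local Notation Q := (cut_polytope R adj).
Local Notation cv := (@cutvec R T adj).

Definition cb (S : {set T}) (e : edgeT adj) : bool := #|val e :&: S| == 1%N.

Lemma cvE S e : cv S e = if cb S e then 1 else 0.
Proof. by rewrite ffunE. Qed.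

Lemma edge_ends (e : edgeT adj) : exists x y, adj x y /\ val e = [set x; y].
Proof.
case: e => /= E /existsP [x /existsP [y /andP [hxy /eqP ->]]].
by exists x, y.
Qed.

Lemma setE2 x y (S : {set T}) z : (z \in [set x; y] :&: S) = ((z == x) && (x \in S)) || ((z == y) && (y \in S)).
Proof.
  rewrite !inE; case: (eqVneq z x) => [->|nzx] /=.
    by case: (eqVneq x y) => [->|] /=; rewrite ?orbb ?orbF.
  by case: (eqVneq z y) => [->|].
Qed.

Lemma card2I x y (S : {set T}) : x != y ->
  (#|[set x; y] :&: S| == 1%N) = (x \in S) (+) (y \in S).
Proof.
move=> nxy.
have ny : y != x by rewrite eq_sym.
have E := setE2 x y S.
case hx: (x \in S); case hy: (y \in S) => /=.
- by rewrite (_ : _ :&: S = [set x; y]) ?cards2 ?nxy //; apply/setP=> z; rewrite E hx hy !inE ?andbT ?andbF ?orbF.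
- by rewrite (_ : _ :&: S = [set x]) ?cards1 //; apply/setP=> z; rewrite E hx hy !inE ?andbT ?andbF ?orbF.
- by rewrite (_ : _ :&: S = [set y]) ?cards1 //; apply/setP=> z; rewrite E hx hy !inE ?andbT ?andbF ?orbF.
- by rewrite (_ : _ :&: S = set0) ?cards0 //; apply/setP=> z; rewrite E hx hy !inE ?andbT ?andbF ?orbF.
Qed.

Lemma cb_ends S (e : edgeT adj) x y : adj x y -> val e = [set x; y] ->
  cb S e = (x \in S) (+) (y \in S).
Proof. by move=> hxy he; rewrite /cb he card2I // adj_irr. Qed.

Lemma mkedge_proof x y : adj x y -> is_edge adj [set x; y].
Proof. by move=> h; apply/existsP; exists x; apply/existsP; exists y; rewrite h eqxx. Qed.

Definition mkedge x y (h : adj x y) : edgeT adj := exist (fun e : {set T} => is_edge adj e) [set x; y] (mkedge_proof h).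

Lemma cb_mkedge S x y (h : adj x y) : cb S (mkedge h) = (x \in S) (+) (y \in S).
Proof. exact: cb_ends. Qed.

Lemma Q_bounds x : Q x -> forall e, 0 <= x e <= 1.
Proof.
move=> [lam [hge [h1 ->]]] e; rewrite ffunE; apply/andP; split.
  by apply: sumr_ge0 => S _; rewrite cvE; case: cb; rewrite ?mulr1 ?mulr0.
rewrite -h1; apply: ler_sum => S _; rewrite cvE; case: cb; rewrite ?mulr1 ?mulr0 //.
Qed.

Lemma Q_cut S : Q (cv S).
Proof.
exists [ffun U => if U == S then 1 else 0]; split; [|split].
- by move=> U; rewrite ffunE; case: eqP.
- by rewrite (bigD1 S) //= ffunE eqxx big1 ?addr0 // => U /negbTE hU; rewrite ffunE hU.
- apply/ffunP=> e; rewrite [RHS]ffunE (bigD1 S) //= [X in X * _]ffunE eqxx mul1r big1 ?addr0 //.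
  by move=> U /negbTE hU; rewrite [X in X * _]ffunE hU mul0r.
Qed.

Definition fc (S : {set T}) (D : pred (edgeT adj)) : point R adj :=
  [ffun e => if D e then 0 else 2 * cv S e - 1].
Definition fd (S : {set T}) (D : pred (edgeT adj)) : R :=
  \sum_e (if D e then 0 else cv S e).

Lemma fd_dot S D x : fd S D - dot (fc S D) x =
  \sum_e (if D e then 0 else (if cb S e then 1 - x e else x e)).
Proof.
rewrite /fd /dot -sumrB; apply: eq_bigr => e _; rewrite [fc S D e]ffunE !cvE.
case: (D e); case: (cb S e); rewrite ?mul0r ?subr0 //.
all: ring.
Qed.

Lemma face_fix S D :
  (forall x, Q x -> dot (fc S D) x <= fd S D) /\
  (forall x, Q x -> (dot (fc S D) x = fd S D <-> forall e, ~~ D e -> x e = cv S e)).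
Proof.
have hterm x e : Q x -> 0 <= (if D e then 0 else (if cb S e then 1 - x e else x e)).
  move=> /Q_bounds /(_ e) /andP [h0 h1].
  by case: (D e); case: (cb S e); rewrite ?subr_ge0.
split.
  move=> x hx; rewrite -subr_ge0 fd_dot; apply: sumr_ge0 => e _; exact: hterm.
move=> x hx; split.
  move=> hd e hDe.
  have hs : fd S D - dot (fc S D) x = 0 by rewrite hd subrr.
  rewrite fd_dot in hs.
  have := psumr_eq0P (fun e _ => hterm x e hx) hs (i := e) isT.
  rewrite (negbTE hDe) cvE; case: (cb S e) => [/eqP|//].
  by rewrite subr_eq0 => /eqP <-.
move=> hag; apply/eqP; rewrite eq_sym -subr_eq0 fd_dot; apply/eqP.
rewrite big1 // => e _; case hDe: (D e) => //.
rewrite hag ?hDe // cvE; case: (cb S e); rewrite ?subrr //.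
Qed.

Lemma vertex_cut S : is_vertex Q (cv S).
Proof.
have [h1 h2] := face_fix S pred0.
exists (fc S pred0), (fd S pred0); split => // x; split.
  move=> ->; split; first exact: Q_cut.
  by apply/(h2 _ (Q_cut S)).
move=> [hx hd]; apply/ffunP => e.
by have := (h2 x hx).1 hd e isT.
Qed.

Lemma dot_comb c (lam : {ffun {set T} -> R}) :
  dot c [ffun e => \sum_S lam S * cv S e] = \sum_S lam S * dot c (cv S).
Proof.
rewrite /dot.
under eq_bigr => e _ do rewrite ffunE mulr_sumr.
rewrite exchange_big; apply: eq_bigr => S _; rewrite mulr_sumr.
by apply: eq_bigr => e _; rewrite mulrCA.
Qed.

Lemma vertex_is_cut u : is_vertex Q u -> exists S, u = cv S.
Proof.
move=> [c [d [hv hF]]].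
have [hu hdu] := (hF u).1 erefl.
move: (hu) => [lam [hge [h1 hx]]].
have [S hS] : exists S, lam S != 0.
  apply/existsP; apply: contraT; rewrite negb_exists => /forallP hall.
  move: h1; rewrite big1 => [/eqP|S _]; first by rewrite eq_sym oner_eq0.
  by move/negbNE/eqP: (hall S).
exists S.
have hsum : \sum_U lam U * (d - dot c (cv U)) = 0.
  under eq_bigr => U _ do rewrite mulrBr.
  by rewrite sumrB -mulr_suml h1 mul1r -dot_comb -hx hdu subrr.
have hge0 U : true -> 0 <= lam U * (d - dot c (cv U)).
  by move=> _; apply: mulr_ge0; [exact: hge | rewrite subr_ge0; apply: hv; exact: Q_cut].
have := psumr_eq0P hge0 hsum (i := S) isT.
move/eqP; rewrite mulf_eq0 (negbTE hS) /= subr_eq0 => /eqP hd.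
by symmetry; apply/(hF (cv S)); split; [exact: Q_cut|].
Qed.

Lemma comb_support S D x (lam : {ffun {set T} -> R}) :
  (forall U, 0 <= lam U) -> \sum_U lam U = 1 ->
  x = [ffun e => \sum_U lam U * cv U e] ->
  (forall e, ~~ D e -> x e = cv S e) ->
  forall U, lam U != 0 -> forall e, ~~ D e -> cv U e = cv S e.
Proof.
move=> hge h1 hx hag U hU e hDe.
have := hag e hDe; rewrite hx [X in X = _]ffunE => hsum.
rewrite cvE in hsum; rewrite !cvE.
case hSe: (cb S e) hsum => hsum.
  have hs2 : \sum_V lam V * (1 - cv V e) = 0.
    under eq_bigr => V _ do rewrite mulrBr mulr1.
    by rewrite sumrB h1 hsum subrr.
  have hg V : true -> 0 <= lam V * (1 - cv V e).
    by move=> _; rewrite mulr_ge0 // cvE; case: cb; rewrite ?subrr ?subr0.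
  move: (psumr_eq0P hg hs2 (i := U) isT) => /eqP.
  rewrite mulf_eq0 (negbTE hU) /= cvE; case: cb => //.
  by rewrite subr0 oner_eq0.
have hg V : true -> 0 <= lam V * cv V e.
  by move=> _; rewrite mulr_ge0 // cvE; case: cb.
move: (psumr_eq0P hg hsum (i := U) isT) => /eqP.
rewrite mulf_eq0 (negbTE hU) /= cvE; case: cb => //.
by rewrite oner_eq0.
Qed.

Lemma comb_line S T' x (lam : {ffun {set T} -> R}) :
  (forall U, 0 <= lam U) -> \sum_U lam U = 1 ->
  x = [ffun e => \sum_U lam U * cv U e] ->
  (forall U, lam U != 0 -> cv U = cv S \/ cv U = cv T') ->
  exists t : R, x = [ffun e => cv S e + t * (cv T' e - cv S e)].
Proof.
move=> hge h1 hx hU.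
exists (\sum_U lam U * (if cv U == cv S then 0 else 1)).
rewrite hx; apply/ffunP => e; rewrite [LHS]ffunE [RHS]ffunE.
have hS : cv S e = \sum_U lam U * cv S e by rewrite -mulr_suml h1 mul1r.
set w := (cv T' e - cv S e).
rewrite mulr_suml hS -big_split /=.
apply: eq_bigr => U _.
have [->|nz] := eqVneq (lam U) 0; first by rewrite !mul0r add0r.
case: ifP => [/eqP ->|ne]; first by rewrite mulr0 mul0r addr0.
case: (hU U nz) => hc; first by rewrite hc eqxx in ne.
by rewrite hc /w; ring.
Qed.

Lemma cb_xor (S A T' : {set T}) e : (forall x, (x \in T') = (x \in S) (+) (x \in A)) ->
  cb T' e = cb S e (+) cb A e.
Proof.
move=> hT; have [x [y [hxy he]]] := edge_ends e.
rewrite !(cb_ends _ hxy he) !hT.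
by case: (x \in S); case: (x \in A); case: (y \in S); case: (y \in A).
Qed.

Lemma ifR_inj (b1 b2 : bool) : ((if b1 then 1 else 0) : R) = (if b2 then 1 else 0) -> b1 = b2.
Proof.
case: b1; case: b2 => // /eqP; by rewrite ?oner_eq0 // eq_sym oner_eq0.
Qed.

Lemma compat_gen (S A T' : {set T}) :
  (forall x, (x \in T') = (x \in S) (+) (x \in A)) ->
  (forall f : T -> bool, (forall x y, adj x y -> (x \in A) = (y \in A) -> f x = f y) ->
      forall x y, (x \in A) = (y \in A) -> f x = f y) ->
  forall U, (forall e, ~~ cb A e -> cv U e = cv S e) -> cv U = cv S \/ cv U = cv T'.
Proof.
move=> hT hconn U H.
pose f x := (x \in U) (+) (x \in S).
have hf : forall x y, adj x y -> (x \in A) = (y \in A) -> f x = f y.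
  move=> x y hxy hA; have := H (mkedge hxy).
  rewrite cb_mkedge hA addbb => /(_ isT).
  rewrite !cvE !cb_mkedge => /ifR_inj; rewrite /f.
  by case: (x \in U); case: (x \in S); case: (y \in U); case: (y \in S).
have hc := hconn f hf.
case: (boolP [forall x, forall y, f x == f y]) => [/forallP hall | ].
  left; apply/ffunP => e; rewrite !cvE.
  have [x [y [hxy he]]] := edge_ends e.
  rewrite !(cb_ends _ hxy he).
  move: (hall x) => /forallP /(_ y) /eqP; rewrite /f.
  by case: (x \in U); case: (x \in S); case: (y \in U); case: (y \in S).
rewrite negb_forall => /existsP [x0]; rewrite negb_forall => /existsP [y0 /eqP hne].
have hA0 : (x0 \in A) = ~~ (y0 \in A).
  case: (x0 \in A) (y0 \in A) (hc x0 y0) => [] [] // /(_ erefl) //.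
have hg : forall x, f x = f x0 (+) (x \in A) (+) (x0 \in A).
  move=> x; case: (boolP ((x \in A) == (x0 \in A))) => [/eqP hxA|hxA].
    by rewrite (hc x x0 hxA) hxA addbK.
  have hxy0 : (x \in A) = (y0 \in A).
    by move: hxA; rewrite hA0; case: (x \in A); case: (y0 \in A).
  rewrite (hc x y0 hxy0) hA0.
  move: hne hxA; rewrite hA0.
  by case: (f x0); case: (f y0); case: (x \in A); case: (y0 \in A).
right; apply/ffunP => e; rewrite !cvE (cb_xor e hT).
have [x [y [hxy he]]] := edge_ends e.
rewrite !(cb_ends _ hxy he).
move: (hg x) (hg y); rewrite /f.
by case: (x \in U); case: (x \in S); case: (y \in U); case: (y \in S);
   case: (x \in A); case: (y \in A); case: (x0 \in U); case: (x0 \in S); case: (x0 \in A).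
Qed.

Lemma adj_lemma (S A T' : {set T}) :
  (forall x, (x \in T') = (x \in S) (+) (x \in A)) ->
  (forall U, (forall e, ~~ cb A e -> cv U e = cv S e) -> cv U = cv S \/ cv U = cv T') ->
  cv S = cv T' \/ skel_adj Q (cv S) (cv T').
Proof.
move=> hT hcomp.
case: (eqVneq (cv S) (cv T')) => [-> |ne]; [by left|right].
have [h1 h2] := face_fix S (cb A).
have hTS : forall e, ~~ cb A e -> cv T' e = cv S e.
  by move=> e he; rewrite !cvE (cb_xor e hT) (negbTE he) addbF.
split; first exact: vertex_cut.
split; first exact: vertex_cut.
split; first exact/eqP.
exists (fun x => Q x /\ forall e, ~~ cb A e -> x e = cv S e).
split.
  exists (fc S (cb A)), (fd S (cb A)); split => // x; split.
    by move=> [hx hag]; split => //; apply/(h2 x hx).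
  by move=> [hx hd]; split => //; exact: (h2 x hx).1 hd.
split; last by split; split; [exact: Q_cut| | exact: Q_cut|].
exists (cv S), (cv T'); split; first by split; [exact: Q_cut|].
split; first by split; [exact: Q_cut|].
split; first exact/eqP.
move=> x [hx hag]; case: hx => lam [hge [hl hxl]].
apply: (comb_line hge hl hxl) => U hU; apply: hcomp => e hDe.
exact: (comb_support hge hl hxl hag hU hDe).
Qed.

End Gen.

Section Tri.
Variables (n1 n2 n3 : nat).
Hypotheses (h1 : (2 <= n1)%N) (h2 : (2 <= n2)%N) (h3 : (2 <= n3)%N).
Local Notation V := (tri_vertex n1 n2 n3).
Local Notation tadj := (tri_adj n1 n2 n3).
Local Notation part := (@tri_part n1 n2 n3).

Lemma tadj_irr : forall x y : V, tadj x y -> x != y.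
Proof. by move=> x y; apply: contra => /eqP ->. Qed.

Definition good (X : {set V}) := forall x y, x \in X -> y \in X -> x != y ->
  part x = part y -> exists2 z, z \in X & part z != part x.

Lemma hconn_tri (A : {set V}) : good A -> good (~: A) ->
  forall f : V -> bool, (forall x y, tadj x y -> (x \in A) = (y \in A) -> f x = f y) ->
      forall x y, (x \in A) = (y \in A) -> f x = f y.
Proof.
move=> gA gC f hf x y hA.
case: (eqVneq x y) => [->//|nxy].
case: (eqVneq (part x) (part y)) => [hp|hp]; last by apply: hf.
have key : forall X : {set V}, good X -> (forall w, w \in X -> (w \in A) = (x \in A)) ->
    x \in X -> y \in X -> f x = f y.
  move=> X gX hXA hx hy; have [z hz hpz] := gX x y hx hy nxy hp.
  have hxz : tadj x z by rewrite /tri_adj eq_sym.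
  have hzy : tadj z y by rewrite /tri_adj -hp.
  rewrite (hf _ _ hxz (esym (hXA z hz))) (hf _ _ hzy) //.
  by rewrite (hXA z hz) (hXA y hy).
case hx: (x \in A).
  apply: (key A) => //; last by rewrite -hA.
  by move=> w ->.
apply: (key (~: A)) => //; last by rewrite !inE -hA hx.
- by move=> w; rewrite inE => /negbTE ->.
- by rewrite inE hx.
Qed.

Definition P (X : {set V}) := good X /\ good (~: X).

Lemma mixed_good (X : {set V}) u v : u \in X -> v \in X -> part u != part v -> good X.
Proof.
move=> hu hv huv x y hx hy _ _.
case: (eqVneq (part x) (part u)) => [e|ne]; last by exists u => //; rewrite eq_sym.
by exists v => //; rewrite e eq_sym.
Qed.

Lemma P_of (X : {set V}) u v u' v' : u \in X -> v \in X -> part u != part v ->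
  u' \notin X -> v' \notin X -> part u' != part v' -> P X.
Proof.
move=> hu hv huv hu' hv' huv'; split; first exact: (mixed_good hu hv).
by apply: (mixed_good (u := u') (v := v')); rewrite ?inE.
Qed.

Lemma h10 : (0 < n1)%N. Proof. by apply: leq_trans h1. Qed.
Lemma h20 : (0 < n2)%N. Proof. by apply: leq_trans h2. Qed.
Lemma h30 : (0 < n3)%N. Proof. by apply: leq_trans h3. Qed.

Definition a0 : V := inl (Ordinal h10).
Definition a1 : V := inl (Ordinal h1).
Definition b0 : V := inr (inl (Ordinal h20)).
Definition b1 : V := inr (inl (Ordinal h2)).
Definition c0 : V := inr (inr (Ordinal h30)).
Definition c1 : V := inr (inr (Ordinal h3)).

Lemma others (p : nat) : exists b b' c c' : V, [/\ b != b', c != c', part b = part b',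
  part c = part c' & [/\ part b != p, part c != p & part b != part c]].
Proof.
case: (eqVneq p 0%N) => [->|n0]; first by exists b0, b1, c0, c1.
case: (eqVneq p 1%N) => [->|n1']; first by exists a0, a1, c0, c1.
by exists a0, a1, b0, b1; split => //; split => //; rewrite eq_sym.
Qed.

Definition symd (B W : {set V}) : {set V} := [set x | (x \in B) (+) (x \in W)].

Lemma comb (W : {set V}) : exists B, P B /\ P (symd B W).
Proof.
have case2 : forall p, (forall x, x \in W -> part x = p) \/ (forall x, x \in ~: W -> part x = p) ->
    exists B, P B /\ P (symd B W).
  move=> p hp; have [b [b' [c [c' [nb nc eb ec [bp cp bc]]]]]] := others p.
  have b'B : b' \notin [set b; c].
    rewrite !inE negb_or eq_sym nb /=; apply: contra bc => /eqP e.
    by rewrite eb e.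
  have c'B : c' \notin [set b; c].
    rewrite !inE negb_or [c' == c]eq_sym nc andbT; apply: contra bc => /eqP e.
    by rewrite ec e.
  have bc' : part b' != part c' by rewrite -eb -ec.
  exists [set b; c]; split.
    apply: (P_of (u := b) (v := c) (u' := b') (v' := c')) => //; rewrite ?inE ?eqxx ?orbT //.
  have nW : forall z, part z != p -> (forall x, x \in W -> part x = p) -> z \notin W.
    by move=> z hz hW; apply: contra hz => /hW ->.
  have yW : forall z, part z != p -> (forall x, x \in ~: W -> part x = p) -> z \in W.
    move=> z hz hW; apply: contraT => hzW.
    by move: hz; rewrite (hW z) ?inE ?eqxx.
  have bB : b \in [set b; c] by rewrite !inE eqxx.
  have cB : c \in [set b; c] by rewrite !inE eqxx orbT.
  case: hp => hW.
    apply: (P_of (u := b) (v := c) (u' := b') (v' := c')); rewrite // /symd in_set.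
    - by rewrite bB (negbTE (nW b bp hW)).
    - by rewrite cB (negbTE (nW c cp hW)).
    - by rewrite (negbTE b'B) (negbTE (nW b' _ hW)) // -eb.
    - by rewrite (negbTE c'B) (negbTE (nW c' _ hW)) // -ec.
  apply: (P_of (u := b') (v := c') (u' := b) (v' := c)); rewrite // /symd in_set.
  - by rewrite (negbTE b'B) (yW b' _ hW) // -eb.
  - by rewrite (negbTE c'B) (yW c' _ hW) // -ec.
  - by rewrite bB (yW b bp hW).
  - by rewrite cB (yW c cp hW).
pose mixed (X : {set V}) := [exists u, exists v, [&& u \in X, v \in X & part u != part v]].
have nm : forall X : {set V}, ~~ mixed X -> exists p, forall x, x \in X -> part x = p.
  move=> X hX; case: (set_0Vmem X) => [->|[x0 hx0]]; first by exists 0%N => x; rewrite inE.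
  exists (part x0) => x hx; apply/eqP; apply: contraR hX => hne.
  by apply/existsP; exists x; apply/existsP; exists x0; rewrite hx hx0.
case: (boolP (mixed W)) => [/existsP [u /existsP [v /and3P [hu hv huv]]]|]; last first.
  by move/nm => [p hp]; apply: (case2 p); left.
case: (boolP (mixed (~: W))) => [/existsP [u' /existsP [v' /and3P [hu' hv' huv']]]|]; last first.
  by move/nm => [p hp]; apply: (case2 p); right.
exists set0; split.
  split; first by move=> x y; rewrite inE.
  by apply: (mixed_good (u := u) (v := v)); rewrite ?inE.
apply: (P_of (u := u) (v := v) (u' := u') (v' := v')); rewrite // /symd in_set ?inE //.
- by move: hu'; rewrite inE.
- by move: hv'; rewrite inE.
Qed.

Lemma walk2 (X : Type) (r : X -> X -> Prop) u v w :
  (u = v \/ r u v) -> (v = w \/ r v w) -> walk_le r 2 u w.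
Proof.
case=> [<-|h]; case=> [<-|h'].
- exact: walk_nil.
- exact: (walk_cons h' (walk_nil _ 1 w)).
- exact: (walk_cons h (walk_nil _ 1 v)).
- exact: (walk_cons h (walk_cons h' (walk_nil _ 0 w))).
Qed.

Lemma part1 (R : realFieldType) (u v : point R tadj) :
  is_vertex (cut_polytope R tadj) u -> is_vertex (cut_polytope R tadj) v ->
  walk_le (skel_adj (cut_polytope R tadj)) 2 u v.
Proof.
move=> /vertex_is_cut [S ->] /vertex_is_cut [T' ->].
have [B [[g1 g2] [g3 g4]]] := comb (symd S T').
pose U := symd S B.
have hU : forall x, (x \in U) = (x \in S) (+) (x \in B) by move=> x; rewrite /U /symd inE.
have hT : forall x, (x \in T') = (x \in U) (+) (x \in symd B (symd S T')).
  move=> x; rewrite hU /symd !inE.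
  by case: (x \in S); case: (x \in B); case: (x \in T').
apply: (walk2 (v := cutvec R tadj U)).
  apply: (adj_lemma tadj_irr hU) => W; apply: (compat_gen tadj_irr hU).
  by move=> f hf x y; apply: (hconn_tri g1 g2 hf).
apply: (adj_lemma tadj_irr hT) => W; apply: (compat_gen tadj_irr hT).
by move=> f hf x y; apply: (hconn_tri g3 g4 hf).
Qed.

Lemma walk1 (X : Type) (r : X -> X -> Prop) u v : walk_le r 1 u v -> u = v \/ r u v.
Proof.
move=> h; inversion h; subst; first by left.
right; inversion H1; subst; done.
Qed.

Definition V1 : {set V} := [set x | part x == 0%N].

Lemma part2 (R : realFieldType) :
  ~ walk_le (skel_adj (cut_polytope R tadj)) 1 (cutvec R tadj set0) (cutvec R tadj V1).
Proof.
have hab : tadj a0 b0 by [].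
have ha1b : tadj a1 b0 by [].
pose e1 := mkedge hab. pose e2 := mkedge ha1b.
have cv0 : forall e, cutvec R tadj set0 e = 0.
  move=> e; rewrite cvE; have [x [y [hxy he]]] := edge_ends e.
  by rewrite (cb_ends tadj_irr _ hxy he) !inE.
move=> hw; case: (walk1 hw) => [heq|hadj].
  have := congr1 (fun f : point R tadj => f e1) heq; rewrite /= !cvE !(cb_mkedge tadj_irr) !inE /=.
  by move/eqP; rewrite eq_sym oner_eq0.
case: hadj => _ [_ [_ [F [[c [d [hv hF]]] [[p [q [hp [hq [hpq hline]]]]] [hFu hFv]]]]]].
pose B := V1 :\ a0.
have hpt : forall e, cutvec R tadj [set a0] e + cutvec R tadj B e =
                     cutvec R tadj set0 e + cutvec R tadj V1 e.
  move=> e; rewrite !cvE; have [x [y [hxy he]]] := edge_ends e.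
  rewrite !(cb_ends tadj_irr _ hxy he) !inE.
  move: hxy; rewrite /tri_adj.
  case: (eqVneq x a0) => [->|nx]; case: (eqVneq y a0) => [->|ny] //=.
  - by rewrite eq_sym => h; rewrite (negbTE h) /= add0r addr0.
  - by move=> h; rewrite (negbTE h) /= add0r addr0.
have dsum : forall X Y : point R tadj, dot c X + dot c Y = \sum_e c e * (X e + Y e).
  by move=> X Y; rewrite /dot -big_split; apply: eq_bigr => e _; rewrite mulrDr.
have hsum : dot c (cutvec R tadj [set a0]) + dot c (cutvec R tadj B) =
            dot c (cutvec R tadj set0) + dot c (cutvec R tadj V1).
  by rewrite !dsum; apply: eq_bigr => e _; rewrite hpt.
have [_ du] := (hF _).1 hFu.
have [_ dv] := (hF _).1 hFv.
have ha := hv _ (Q_cut R tadj [set a0]).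
have hb := hv _ (Q_cut R tadj B).
have dw : dot c (cutvec R tadj [set a0]) = d by lra.
have hFw : F (cutvec R tadj [set a0]) by apply/hF; split; [exact: Q_cut|].
have [tu Hu] := hline _ hFu.
have [tv Hv] := hline _ hFv.
have [tw Hw] := hline _ hFw.
have ev : forall (t : R) (X : point R tadj) e,
    X = [ffun e => p e + t * (q e - p e)] -> X e = p e + t * (q e - p e).
  by move=> t X e ->; rewrite ffunE.
have u1 := ev _ _ e1 Hu. have v1 := ev _ _ e1 Hv. have w1 := ev _ _ e1 Hw.
have v2 := ev _ _ e2 Hv. have w2 := ev _ _ e2 Hw.
move: v1 w1 v2 w2; rewrite !cvE !(cb_mkedge tadj_irr) !inE /=.
rewrite cv0 in u1.
move=> v1 w1 v2 w2.
set d1 := q e1 - p e1 in u1 v1 w1.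
have ht : (tv - tw) * d1 = 0.
  have -> : (tv - tw) * d1 = (p e1 + tv * d1) - (p e1 + tw * d1) by ring.
  by rewrite -v1 -w1 subrr.
have d1nz : d1 != 0.
  apply/negP => /eqP hd; move: u1 v1; rewrite hd !mulr0 !addr0 => <-.
  by move/eqP; rewrite ?oner_eq0 // eq_sym oner_eq0.
move: ht => /eqP; rewrite mulf_eq0 (negbTE d1nz) orbF subr_eq0 => /eqP htv.
move: v2; rewrite htv -w2.
by move/eqP; rewrite ?oner_eq0 // eq_sym oner_eq0.
Qed.
End Tri.

Local Close Scope ring_scope.

Theorem theorem10 (R : realFieldType) (n1 n2 n3 : nat) :
  (2 <= n1)%N -> (2 <= n2)%N -> (2 <= n3)%N ->
  skel_diameter (cut_polytope R (tri_adj n1 n2 n3)) 2.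
Proof.
move=> h1 h2 h3; split.
  by move=> u v hu hv; apply: part1.
exists (cutvec R (tri_adj n1 n2 n3) set0), (cutvec R (tri_adj n1 n2 n3) (V1 n1 n2 n3)).
split; first exact: vertex_cut.
split; first exact: vertex_cut.
exact: part2.
Qed.
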